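(* Let $k$ be even, $1\le s\le k-1$, and let $G$ be a $k$-uniform $s$-cycle with $m$ edges and $n=m(k-s)$ vertices. Assume that $k=q(k-s)$ for some integer $q$, and write $q=2^{t_0}(2l_0+1)$ with nonnegative integers $t_0,l_0$. Then $G$ is odd-bipartite if and only if $m$ is a multiple of $2^{t_0}$.
   Context: A $k$-uniform $s$-cycle with $m$ edges has vertex set $\mathbb{Z}_n$, $n=m(k-s)$ (vertex $n+i$ identified with $i$), and edges $e_j=\{j(k-s)+1,\ldots,j(k-s)+k\}$, $j=0,\ldots,m-1$; it is assumed that $n\ge 2k-s$. A $k$-uniform hypergraph with $k$ even and vertex set $V$ is odd-bipartite if either it has no edges or there is a partition $V=V_1\cup V_2$ with $V_1,V_2\ne\emptyset$ such that every edge intersects $V_1$ in an odd number of vertices. *)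

(* Defs.v *)
From mathcomp Require Import all_boot.
Set Implicit Arguments. Unset Strict Implicit. Unset Printing Implicit Defensive.

Definition odd_bipartite (V : finType) (E : seq {set V}) : Prop :=
  E = [::] \/
  exists V1 : {set V},
    [/\ V1 != set0, ~: V1 != set0 & forall e, e \in E -> odd #|e :&: V1|].

(* Vertex set Z_n, n = m(k-s), represented by 'I_(m*(k-s)); the paper's vertex
   label x (with vertex n+i identified with i) is the residue x mod n. *)
Definition scycle_edge (k s m j : nat) : {set 'I_(m * (k - s))} :=
  [set v : 'I_(m * (k - s)) |
     [exists i : 'I_k, val v == (j * (k - s) + i.+1) %% (m * (k - s))]].

Definition scycle (k s m : nat) : seq {set 'I_(m * (k - s))} :=
  [seq scycle_edge k s m j | j <- iota 0 m].

(* Main.v *)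
Require Import Defs.
From mathcomp Require Import all_boot zify.
Set Implicit Arguments. Unset Strict Implicit. Unset Printing Implicit Defensive.
Lemma count_mult (a k p : nat) : 0 < p ->
  \sum_(i < k) ((a + i.+1) %% p == 0 : nat) = (a + k) %/ p - a %/ p.
Proof.
move=> p0; elim: k => [|k IH]; first by rewrite big_ord0 addn0 subnn.
rewrite big_ord_recr /= IH addnS divnS // /dvdn.
have : a %/ p <= (a + k) %/ p by apply: leq_div2r; rewrite leq_addr.
lia.
Qed.

Lemma sum_split (h : nat -> nat) q d :
  \sum_(i < q * d) h i = \sum_(r < q) \sum_(i < d) h (r * d + i).
Proof.
elim: q => [|q IH]; first by rewrite mul0n !big_ord0.
rewrite big_ord_recr /= -IH mulSn addnC -!(big_mkord xpredT).
rewrite (big_cat_nat _ (n := q * d)) ?leq_addr //=.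
congr (_ + _).
rewrite -{1}(add0n (q*d)) big_addn.
rewrite addKn big_mkord.
apply: eq_bigr => i _; by rewrite addnC.
Qed.

Lemma odd_sum_eq g (f h : nat -> nat) :
  (forall i, i < g -> odd (f i) = odd (h i)) ->
  odd (\sum_(i < g) f i) = odd (\sum_(i < g) h i).
Proof.
elim: g => [|g IH] H; first by rewrite !big_ord0.
rewrite !big_ord_recr /= !oddD IH ?H // => i Hi; apply: H; exact: ltnW.
Qed.

Definition per (B : nat -> bool) p := forall j, B (j + p) = B j.

Lemma per_sub B a b : per B a -> per B b -> b <= a -> per B (a - b).
Proof. move=> Ha Hb ba j; by rewrite -Hb -addnA subnK. Qed.

Lemma per_gcd B a b : per B a -> per B b -> per B (gcdn a b).
Proof.
move: {2}(a + b) (leqnn (a + b)) => N; elim: N a b => [|N IH] a b.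
  by rewrite leqn0 addn_eq0 => /andP[/eqP -> /eqP ->].
move=> HN Ha Hb.
case: (posnP a) => [-> | a0]; first by rewrite gcd0n.
case: (posnP b) => [-> | b0]; first by rewrite gcdn0.
case: (leqP b a) => ba.
  have -> : gcdn a b = gcdn b (a - b) by rewrite gcdnC -{1}(subnKC ba) gcdnDl.
  apply: IH => //; last exact: per_sub. lia.
have -> : gcdn a b = gcdn a (b - a) by rewrite -{1}(subnKC (ltnW ba)) gcdnDl.
apply: IH => //; last (apply: per_sub => //; exact: ltnW). lia.
Qed.

Lemma per_mul B p t : per B p -> per B (t * p).
Proof.
move=> H; elim: t => [|t IH] j; first by rewrite addn0.
by rewrite mulSn addnA IH H.
Qed.

Definition Fb n (V1 : {set 'I_n}) (x : nat) : bool := [exists v in V1, val v == x %% n].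

Lemma Fb_mod n (V1 : {set 'I_n}) x : 0 < n -> forall (v : 'I_n), val v = x %% n -> Fb V1 x = (v \in V1).
Proof.
move=> n0 v hv; apply/existsP/idP => [[w /andP[wV /eqP hw]]|vV].
  by have -> : v = w by apply: val_inj; rewrite hv hw.
by exists v; rewrite vV hv eqxx.
Qed.

Lemma card_edge k s m j (V1 : {set 'I_(m * (k - s))}) :
  k < m * (k - s) ->
  #|scycle_edge k s m j :&: V1| = \sum_(i < k) Fb V1 (j * (k - s) + i.+1).
Proof.
set n := m * (k - s) => kn.
have n0 : 0 < n by apply: leq_ltn_trans kn.
pose gm (i : 'I_k) : 'I_n := Ordinal (ltn_pmod (j * (k - s) + i.+1) n0).
have gi : injective gm.
  move=> a b hab; apply: val_inj.
  have : (j * (k - s) + a.+1) %% n = (j * (k - s) + b.+1) %% n by exact: (congr1 val hab).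
  move/eqP; rewrite eqn_modDl -(addn1 a) -(addn1 b) eqn_modDr.
  rewrite (modn_small (ltn_trans (ltn_ord a) kn)) (modn_small (ltn_trans (ltn_ord b) kn)).
  by move/eqP.
have -> : scycle_edge k s m j :&: V1 = gm @: [set i | gm i \in V1].
  apply/setP => v; rewrite !inE; apply/andP/imsetP.
    move=> [/existsP[i /eqP hi] vV]; exists i; last by apply: val_inj.
    by rewrite inE; have <- : v = gm i by apply: val_inj.
  move=> [i]; rewrite inE => hi ->; split => //.
  by apply/existsP; exists i.
rewrite card_imset // -sum1_card big_mkcond /=.
apply: eq_bigr => i _; rewrite inE (Fb_mod V1 n0 (v := gm i)) //; by case: (gm i \in V1).

Qed.


Lemma edge_mod k s m j :
  scycle_edge k s m j = scycle_edge k s m (j %% m).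
Proof.
apply/setP => v; rewrite !inE; apply: eq_existsb => i.
have -> : j * (k - s) + i.+1 = j %/ m * (m * (k - s)) + (j %% m * (k - s) + i.+1).
  by rewrite addnA mulnA -mulnDl -divn_eq.
by rewrite modnMDl.
Qed.

Lemma sum_split' k q d (h : nat -> nat) : k = q * d ->
  \sum_(i < k) h i = \sum_(r < q) \sum_(i < d) h (r * d + i).
Proof. move=> ->; exact: sum_split. Qed.

Lemma Fb_addn n (V1 : {set 'I_n}) x : Fb V1 (x + n) = Fb V1 x.
Proof. by rewrite /Fb modnDr. Qed.

Lemma Fb_setT n x : 0 < n -> Fb [set: 'I_n] x.
Proof. move=> n0; by rewrite (Fb_mod _ n0 (v := Ordinal (ltn_pmod x n0))) ?inE. Qed.

Lemma mem_scycle k s m e :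
  e \in scycle k s m -> exists2 j, j < m & e = scycle_edge k s m j.
Proof. by case/mapP => j; rewrite mem_iota add0n => /andP[_ jm] ->; exists j. Qed.

Lemma edge_in k s m j : 0 < m -> scycle_edge k s m j \in scycle k s m.
Proof.
move=> m0; rewrite edge_mod; apply: map_f; rewrite mem_iota add0n ltn_pmod //.
Qed.

Theorem theorem4p1 (k s m q t0 l0 : nat) :
  ~~ odd k ->
  1 <= s <= k - 1 ->
  2 * k - s <= m * (k - s) ->
  k = q * (k - s) ->
  q = 2 ^ t0 * (2 * l0 + 1) ->
  odd_bipartite (scycle k s m) <-> 2 ^ t0 %| m.
Proof.
move=> ek /andP[s1 sk] Hn Hq Hq'.
have d0 : 0 < k - s by lia.
have kn : k < m * (k - s) by lia.
have n0 : 0 < m * (k - s) by lia.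
have m0 : 0 < m by move: n0; rewrite muln_gt0 => /andP[].
have q0 : 0 < q by rewrite lt0n; apply/eqP => q00; move: Hq; rewrite q00 mul0n; lia.
have nonempty : forall V1 : {set 'I_(m * (k - s))},
    (forall j, odd #|scycle_edge k s m j :&: V1|) -> V1 != set0 /\ ~: V1 != set0.
  move=> V1 HV; split; apply/negP => /eqP H0.
    by have := HV 0; rewrite H0 setI0 cards0.
  have HT : V1 = setT.
    apply/setP => v; rewrite inE; apply/negPn/negP => nv.
    have : v \in ~: V1 by rewrite inE.
    by rewrite H0 inE.
  have := HV 0; rewrite HT card_edge //.
  under eq_bigr => i _ do rewrite Fb_setT //.
  by rewrite sum_nat_const card_ord muln1 (negbTE ek).
split.
- case.
    by move=> H; have := edge_in k s 0 m0; rewrite H.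
  move=> [V1 [_ _ HV]].
  pose c j := \sum_(i < k) Fb V1 (j * (k - s) + i.+1).
  pose b j := \sum_(i < k - s) Fb V1 (j * (k - s) + i.+1).
  have Hc : forall j, odd (c j).
    by move=> j; rewrite /c -card_edge //; apply: HV; apply: edge_in.
  have cE : forall j, c j = \sum_(r < q) b (j + r).
    move=> j; rewrite /c (sum_split' (fun i => Fb V1 (j * (k - s) + i.+1)) Hq); apply: eq_bigr => r _.
    rewrite /b; apply: eq_bigr => i _; congr (nat_of_bool (Fb V1 _)); rewrite mulnDl; lia.
  have bm : forall j, b (j + m) = b j.
    move=> j; apply: eq_bigr => i _.
    by rewrite mulnDl addnAC Fb_addn.
  have step : forall j, c (j + 1) + b j = c j + b (j + q).
    move=> j; rewrite !cE -(prednK q0).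
    rewrite [in LHS]big_ord_recr [in RHS]big_ord_recl /=.
    have -> : j + 1 + q.-1 = j + q.-1.+1 by lia.
    rewrite addn0 -addnA [b _ + b j]addnC addnA [b j + _]addnC; congr (_ + _ + _).
    apply: eq_bigr => i _; congr b; rewrite /bump add1n; lia.
  pose B j := odd (b j).
  have pq : per B q.
    move=> j; have := congr1 odd (step j); rewrite !oddD !Hc /B.
    by case: (odd (b j)); case: (odd (b (j + q))).
  have pm : per B m by move=> j; rewrite /B bm.
  set g := gcdn q m.
  have pg := per_gcd pq pm; rewrite -/g in pg.
  have qE : q = q %/ g * g by rewrite divnK // dvdn_gcdl.
  have := Hc 0; rewrite cE.
  under eq_bigr => r _ do rewrite add0n.
  rewrite (sum_split' b qE).
  rewrite (@odd_sum_eq _ (fun t => \sum_(i < g) b (t * g + i)) (fun _ => \sum_(i < g) b i)); last first.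
    move=> t _; apply: (@odd_sum_eq _ (fun i => b (t * g + i)) b) => i _.
    by have := per_mul t pg i; rewrite /B addnC.
  rewrite sum_nat_const card_ord oddM => /andP[ou _].
  have : 2 ^ t0 %| g * (q %/ g).
    by rewrite mulnC -qE Hq' dvdn_mulr.
  rewrite Gauss_dvdl; last by rewrite coprimeXl // coprime2n.
  move=> H; apply: dvdn_trans H _; exact: dvdn_gcdr.
- move=> dm.
  pose p := 2 ^ t0 * (k - s).
  have p0 : 0 < p by rewrite muln_gt0 expn_gt0.
  have pn : p %| m * (k - s) by rewrite dvdn_mul.
  have kp : k = p * (2 * l0 + 1) by rewrite Hq Hq' /p mulnAC.
  pose V1 := [set v : 'I_(m * (k - s)) | val v %% p == 0].
  have HV : forall j, odd #|scycle_edge k s m j :&: V1|.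
    move=> j; rewrite card_edge //.
    have -> : \sum_(i < k) Fb V1 (j * (k - s) + i.+1) =
              \sum_(i < k) ((j * (k - s) + i.+1) %% p == 0 : nat).
      apply: eq_bigr => i _.
      rewrite (Fb_mod _ n0 (v := Ordinal (ltn_pmod (j * (k - s) + i.+1) n0))) // inE /=.
      by rewrite (modn_dvdm _ pn).
    rewrite count_mult // addnC divnDl; last by rewrite kp dvdn_mulr.
    by rewrite addnK kp mulKn // addnC oddD oddM.
  right; exists V1; have [h1 h2] := nonempty V1 HV; split => // e /mem_scycle [j _ ->].
  exact: HV.
Qed.
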